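(* Let $G$ be a graph on which a vertex-edge marking game $\mathcal G$ is being played, and let $n\ge 0$ be an integer. If at some round it is Bob's turn and there is an $n$-free path in $G$, then Bob has a strategy forcing the final score of $\mathcal G$ to be at least $n+3$.
   Context: The vertex-edge marking game on a graph $G=(V,E)$ (finite or infinite) is played by Alice, who marks vertices, and Bob, who marks edges. Initially nothing is marked. The game proceeds in rounds $r=1,2,\dots$; in each round Alice first marks one unmarked vertex, then Bob marks one unmarked edge. For a finite graph the game ends when either player has no move; for an infinite graph it continues forever. After round $r$, the vertex score of $v$ is $0$ if $v$ is marked, and otherwise the number of marked edges incident to $v$. The $r$-round score is the supremum over $v\in V$ of the vertex scores after round $r$, and the final score of the game is the supremum of the $r$-round scores over all rounds. In a position of the game, an $n$-free path is a path $P$ in $G$ with vertex sequence $v_0,\dots,v_k$, $k\ge 2$, such that: the first and last edges $v_0v_1$ and $v_{k-1}v_k$ are marked; the interior vertices $v_1,\dots,v_{k-1}$ are unmarked; and each interior vertex is incident to at least $n+1$ edges not in $P$, at least $n$ of which are marked. *)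

(* Defs.v *)
From Stdlib Require Import Arith List.
Import ListNotations.

Section Game.
Variable V : Type.
Variable adj : V -> V -> Prop.

(* A whole play from the empty board: in round t (t = 0,1,2,...) Alice marks
   vertex A t, then Bob marks the edge {fst (B t), snd (B t)}. *)

Definition MV (A : nat -> V) (t : nat) (v : V) : Prop :=
  exists i, i < t /\ A i = v.

Definition ME (B : nat -> V * V) (t : nat) (x y : V) : Prop :=
  exists j, j < t /\ (B j = (x, y) \/ B j = (y, x)).

Definition alice_legal (A : nat -> V) (i : nat) : Prop := ~ MV A i (A i).

Definition bob_legal (B : nat -> V * V) (j : nat) : Prop :=
  adj (fst (B j)) (snd (B j)) /\ ~ ME B j (fst (B j)) (snd (B j)).

Definition vertex_score_ge (mv : V -> Prop) (me : V -> V -> Prop) (v : V) (m : nat) : Prop :=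
  ~ mv v /\ exists l : list V, NoDup l /\ length l = m /\ Forall (fun u => me v u) l.

Definition score_ge (mv : V -> Prop) (me : V -> V -> Prop) (m : nat) : Prop :=
  exists v, vertex_score_ge mv me v m.

(* Plays in which Alice
   makes an illegal move although a legal one was available are not genuine
   plays and are discarded (second disjunct). *)
Definition final_score_ge (A : nat -> V) (B : nat -> V * V) (m : nat) : Prop :=
  exists k,
    (forall i, i <= k -> alice_legal A i) /\
    (forall j, j <= k -> bob_legal B j) /\
    ( score_ge (MV A (S k)) (ME B (S k)) m \/
      (~ alice_legal A (S k) /\ exists v, ~ MV A (S k) v) ).

Definition n_free_path (mv : V -> Prop) (me : V -> V -> Prop) (n : nat) : Prop :=
  exists (p : nat -> V) (k : nat),
    2 <= k /\
    (forall i j, i <= k -> j <= k -> p i = p j -> i = j) /\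
    (forall i, i < k -> adj (p i) (p (S i))) /\
    me (p 0) (p 1) /\ me (p (k - 1)) (p k) /\
    (forall i, 0 < i < k ->
       ~ mv (p i) /\
       (exists l : list V, NoDup l /\ length l = S n /\
          Forall (fun u => adj (p i) u /\ u <> p (i - 1) /\ u <> p (S i)) l) /\
       (exists l : list V, NoDup l /\ length l = n /\
          Forall (fun u => adj (p i) u /\ me (p i) u /\ u <> p (i - 1) /\ u <> p (S i)) l)).

(* Play obtained from a history (Alice moves pa 0..pa r, Bob moves pb 0..pb (r-1)),
   continued by Bob's strategy sigma (a function of Alice's moves after the
   history) and Alice's subsequent moves c 0, c 1, ... *)
Definition play_A (r : nat) (pa : nat -> V) (c : nat -> V) (t : nat) : V :=
  if Nat.leb t r then pa t else c (t - S r).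

Definition play_B (r : nat) (pb : nat -> V * V) (sigma : list V -> V * V)
  (c : nat -> V) (t : nat) : V * V :=
  if Nat.ltb t r then pb t else sigma (map c (seq 0 (t - r))).

End Game.

Arguments MV {V}.
Arguments ME {V}.
Arguments alice_legal {V}.
Arguments bob_legal {V}.
Arguments vertex_score_ge {V}.
Arguments score_ge {V}.
Arguments final_score_ge {V}.
Arguments n_free_path {V}.
Arguments play_A {V}.
Arguments play_B {V}.

(* Main.v *)
Require Import Defs.
From Stdlib Require Import Arith List.
From Stdlib Require Import Lia Setoid Classical ClassicalEpsilon FunctionalExtensionality.
Import ListNotations.

Lemma MV_ext {V} (A A' : nat -> V) t : (forall i, i < t -> A i = A' i) ->
  forall v, MV A t v <-> MV A' t v.
Proof.
  intros H v; unfold MV; split; intros [i [Hi Hv]]; exists i; split; auto;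
  [rewrite <- H | rewrite H]; auto.
Qed.

Lemma ME_ext {V} (B B' : nat -> V * V) t : (forall i, i < t -> B i = B' i) ->
  forall x y, ME B t x y <-> ME B' t x y.
Proof.
  intros H x y; unfold ME; split; intros [i [Hi Hv]]; exists i; split; auto;
  [rewrite <- H | rewrite H]; auto.
Qed.

Lemma alice_legal_ext {V} (A A' : nat -> V) t i :
  (forall j, j <= t -> A j = A' j) -> i <= t -> (alice_legal A i <-> alice_legal A' i).
Proof.
  intros H Hi; unfold alice_legal. rewrite (H i Hi).
  rewrite (MV_ext A A' i) by (intros; apply H; lia). tauto.
Qed.

Lemma bob_legal_ext {V} adj (B B' : nat -> V * V) t j :
  (forall i, i <= t -> B i = B' i) -> j <= t -> (bob_legal adj B j <-> bob_legal adj B' j).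
Proof.
  intros H Hj; unfold bob_legal. rewrite (H j Hj).
  rewrite (ME_ext B B' j) by (intros; apply H; lia). tauto.
Qed.

Lemma ME_S {V} (B : nat -> V * V) t x y :
  ME B (S t) x y <-> ME B t x y \/ B t = (x,y) \/ B t = (y,x).
Proof.
  split.
  - intros [j [Hj H]]. destruct (Nat.eq_dec j t).
    + subst; right; auto.
    + left; exists j; split; [lia|auto].
  - intros [[j [Hj H]]|H]; [exists j; split; [lia|auto] | exists t; split; [lia|auto]].
Qed.

Lemma MV_S {V} (A : nat -> V) t v : MV A (S t) v <-> MV A t v \/ A t = v.
Proof.
  split.
  - intros [j [Hj H]]. destruct (Nat.eq_dec j t).
    + subst; right; auto.
    + left; exists j; split; [lia|auto].
  - intros [[j [Hj H]]|H]; [exists j; split; [lia|auto] | exists t; split; [lia|auto]].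
Qed.

Lemma ME_mono {V} (B : nat -> V * V) t t' x y : ME B t x y -> t <= t' -> ME B t' x y.
Proof. intros [j [Hj H]] Ht; exists j; split; [lia|auto]. Qed.

Lemma MV_mono {V} (A : nat -> V) t t' v : MV A t v -> t <= t' -> MV A t' v.
Proof. intros [j [Hj H]] Ht; exists j; split; [lia|auto]. Qed.

Lemma ME_sym {V} (B : nat -> V * V) t x y : ME B t x y -> ME B t y x.
Proof. intros [j [Hj H]]; exists j; split; [lia|tauto]. Qed.

Lemma playA_lo {V} r (pa c : nat -> V) i : i <= r -> play_A r pa c i = pa i.
Proof. intros H; unfold play_A; rewrite (proj2 (Nat.leb_le _ _) H); auto. Qed.

Lemma playB_lo {V} r (pb : nat -> V * V) s (c : nat -> V) j : j < r -> play_B r pb s c j = pb j.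
Proof. intros H; unfold play_B; rewrite (proj2 (Nat.ltb_lt _ _) H); auto. Qed.

Lemma playB_r {V} r (pb : nat -> V * V) s (c : nat -> V) : play_B r pb s c r = s [].
Proof. unfold play_B; rewrite Nat.ltb_irrefl, Nat.sub_diag; auto. Qed.

Lemma playA_Sr {V} r (pa c : nat -> V) : play_A r pa c (S r) = c 0.
Proof.
  unfold play_A. replace (S r <=? r) with false by (symmetry; apply Nat.leb_gt; lia).
  rewrite Nat.sub_diag; auto.
Qed.

Lemma shiftA {V} r (pa c : nat -> V) :
  play_A r pa c = play_A (S r) (fun t => if t <=? r then pa t else c 0) (fun i => c (S i)).
Proof.
  apply functional_extensionality; intro t; unfold play_A.
  destruct (Nat.leb_spec t r); destruct (Nat.leb_spec t (S r)); try lia; auto.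
  - replace t with (S r) by lia. rewrite Nat.sub_diag. auto.
  - f_equal; lia.
Qed.

Lemma shiftB {V} r (pb : nat -> V * V) sigma (c : nat -> V) :
  play_B r pb sigma c = play_B (S r) (fun t => if t <? r then pb t else sigma [])
     (fun l => sigma (c 0 :: l)) (fun i => c (S i)).
Proof.
  apply functional_extensionality; intro t; unfold play_B.
  destruct (Nat.ltb_spec t r); destruct (Nat.ltb_spec t (S r)); try lia; auto.
  - replace t with r by lia. rewrite Nat.sub_diag. auto.
  - replace (t - r) with (S (t - S r)) by lia. simpl. f_equal. f_equal.
    rewrite <- seq_shift, map_map. auto.
Qed.

Lemma finish {V} (adj : V -> V -> Prop) n t (pb : nat -> V * V) w (M N : list V) :
  NoDup M -> length M = n + 2 -> Forall (fun u => ME pb t w u) M ->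
  NoDup N -> length N = n + 3 -> Forall (fun u => adj w u) N ->
  exists f, forall pa c,
    (forall i, i <= t -> alice_legal pa i) ->
    (forall j, j < t -> bob_legal adj pb j) -> ~ MV pa (S t) w ->
    final_score_ge adj (play_A t pa c) (play_B t pb (fun _ => f) c) (n + 3).
Proof.
  intros HM HMl HMf HN HNl HNf.
  destruct (classic (exists u, In u N /\ ~ ME pb t w u)) as [[u [Hu Hnm]] | Hall].
  - exists (w, u). intros pa c HA HB Hw. exists t. split; [|split].
    + intros i Hi. apply (alice_legal_ext _ pa t); auto.
      intros; apply playA_lo; auto.
    + intros j Hj. destruct (Nat.eq_dec j t).
      * subst. unfold bob_legal. rewrite playB_r. simpl. split.
        -- rewrite Forall_forall in HNf; auto.
        -- rewrite (ME_ext _ pb t) by (intros; apply playB_lo; auto). auto.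
      * apply (bob_legal_ext _ _ pb j); try lia. intros; apply playB_lo; lia.
        apply HB; lia.
    + left. exists w. split.
      * rewrite (MV_ext _ pa (S t)) by (intros; apply playA_lo; lia). auto.
      * exists (u :: M). split; [|split].
        -- constructor; auto. intro Hin. rewrite Forall_forall in HMf. auto.
        -- simpl; lia.
        -- constructor.
           ++ apply ME_S. right. left. rewrite playB_r. auto.
           ++ eapply Forall_impl; [|exact HMf]. intros a Ha. apply ME_S. left.
              rewrite (ME_ext _ pb t) by (intros; apply playB_lo; auto). auto.
  - exists (w, w). intros pa c HA HB Hw.
    destruct M as [|m M']; [simpl in HMl; lia|].
    inversion HMf as [|? ? Hm _]; subst.
    destruct t as [|k]; [destruct Hm as [j [Hj _]]; lia|].
    exists k. split; [|split].
    + intros i Hi. apply (alice_legal_ext _ pa (S k)); try lia.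
      intros; apply playA_lo; auto. apply HA; lia.
    + intros j Hj. apply (bob_legal_ext _ _ pb j); try lia. intros; apply playB_lo; lia.
      apply HB; lia.
    + left. exists w. split.
      * rewrite (MV_ext _ pa (S k)) by (intros; apply playA_lo; lia).
        intro H; apply Hw; eapply MV_mono; eauto.
      * exists N. split; [|split]; auto.
        apply Forall_forall. intros u Hu.
        rewrite (ME_ext _ pb (S k)) by (intros; apply playB_lo; auto).
        apply NNPP; intro Hn; apply Hall; eauto.
Qed.

Lemma main {V} (adj : V -> V -> Prop) (adj_sym : forall x y, adj x y -> adj y x) n :
  forall k r (pa : nat -> V) (pb : nat -> V * V) (p : nat -> V), 2 <= k ->
  (forall i, i <= r -> alice_legal pa i) ->
  (forall j, j < r -> bob_legal adj pb j) ->
  (forall i j, i <= k -> j <= k -> p i = p j -> i = j) ->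
  (forall i, i < k -> adj (p i) (p (S i))) ->
  ME pb r (p 0) (p 1) -> ME pb r (p (k - 1)) (p k) ->
  (forall i, 0 < i < k ->
       ~ MV pa (S r) (p i) /\
       (exists l : list V, NoDup l /\ length l = S n /\
          Forall (fun u => adj (p i) u /\ u <> p (i - 1) /\ u <> p (S i)) l) /\
       (exists l : list V, NoDup l /\ length l = n /\
          Forall (fun u => adj (p i) u /\ ME pb r (p i) u /\ u <> p (i - 1) /\ u <> p (S i)) l)) ->
  exists sigma, forall c, final_score_ge adj (play_A r pa c) (play_B r pb sigma c) (n + 3).
Proof.
  induction k as [|k IH]; intros r pa pb p Hk HA HB Hinj Hadj H01 Hlast Hint; [lia|].
  destruct (Hint 1 ltac:(lia)) as [Hun1 [[Loff [HLo1 [HLo2 HLo3]]] [Lm [HLm1 [HLm2 HLm3]]]]].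
  simpl in HLo3, HLm3.
  assert (Hp02 : p 0 <> p 2) by (intro E; apply Hinj in E; lia).
  assert (HMnd : NoDup (p 0 :: p 2 :: Lm)).
  { constructor; [|constructor]; auto.
    - intros [E|Hin]; [auto|]. rewrite Forall_forall in HLm3. apply HLm3 in Hin. tauto.
    - intros Hin. rewrite Forall_forall in HLm3. apply HLm3 in Hin. tauto. }
  assert (HNnd : NoDup (p 0 :: p 2 :: Loff)).
  { constructor; [|constructor]; auto.
    - intros [E|Hin]; [auto|]. rewrite Forall_forall in HLo3. apply HLo3 in Hin. tauto.
    - intros Hin. rewrite Forall_forall in HLo3. apply HLo3 in Hin. tauto. }
  assert (HNadj : Forall (fun u => adj (p 1) u) (p 0 :: p 2 :: Loff)).
  { constructor; [apply adj_sym, Hadj; lia|constructor; [apply Hadj; lia|]].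
    eapply Forall_impl; [|exact HLo3]. simpl; tauto. }
  assert (HNl : length (p 0 :: p 2 :: Loff) = n + 3) by (simpl; lia).
  assert (HMl : length (p 0 :: p 2 :: Lm) = n + 2) by (simpl; lia).
  destruct (classic (ME pb r (p 1) (p 2))) as [Hm | Hnm].
  - destruct (finish adj n r pb (p 1) (p 0 :: p 2 :: Lm) (p 0 :: p 2 :: Loff))
      as [f Hf]; auto.
    { constructor; [apply ME_sym; auto|constructor; auto].
      eapply Forall_impl; [|exact HLm3]. simpl; tauto. }
    exists (fun _ => f). intros c. apply Hf; auto.
  - assert (Hk2 : 2 <= k).
    { destruct k as [|[|k']]; try lia. simpl in Hlast. contradiction. }
    set (e := (p 1, p 2)).
    set (pb1 := fun t => if t <? r then pb t else e).
    set (pa1 := fun t => if t <=? r then pa t else p 1).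
    assert (HB1 : forall j, j < S r -> bob_legal adj pb1 j).
    { intros j Hj. destruct (Nat.eq_dec j r).
      - subst j. unfold bob_legal, pb1. rewrite Nat.ltb_irrefl. simpl. split.
        + apply Hadj; lia.
        + rewrite (ME_ext _ pb r); auto. intros i Hi. rewrite (proj2 (Nat.ltb_lt _ _) Hi); auto.
      - apply (bob_legal_ext _ _ pb j); try lia.
        + intros i Hi. unfold pb1. rewrite (proj2 (Nat.ltb_lt i r)) by lia; auto.
        + apply HB; lia. }
    assert (HME1 : forall x y, ME pb r x y -> ME pb1 (S r) x y).
    { intros x y H. apply ME_S. left. rewrite (ME_ext _ pb r); auto.
      intros i Hi. unfold pb1. rewrite (proj2 (Nat.ltb_lt i r)) by lia; auto. }
    assert (HMVa : forall (x : V) v,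
       MV (fun t => if t <=? r then pa t else x) (S r) v <-> MV pa (S r) v).
    { intros x v. apply MV_ext. intros i Hi. rewrite (proj2 (Nat.leb_le i r)) by lia; auto. }
    assert (HAx : forall x : V, ~ MV pa (S r) x ->
       forall i, i <= S r -> alice_legal (fun t => if t <=? r then pa t else x) i).
    { intros x Hx i Hi. destruct (Nat.eq_dec i (S r)).
      - subst i. unfold alice_legal. rewrite HMVa.
        replace (S r <=? r) with false by (symmetry; apply Nat.leb_gt; lia). auto.
      - apply (alice_legal_ext _ pa r); try lia.
        + intros j Hj. rewrite (proj2 (Nat.leb_le j r)) by lia; auto.
        + apply HA; lia. }
    destruct (IH (S r) pa1 pb1 (fun i => p (S i))) as [sigma1 Hs1].
    + exact Hk2.
    + apply HAx, Hun1.
    + exact HB1.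
    + intros i j Hi Hj E. apply Hinj in E; lia.
    + intros i Hi. apply Hadj; lia.
    + apply ME_S. right. left. unfold pb1. rewrite Nat.ltb_irrefl. auto.
    + replace (S (k - 1)) with (S k - 1) by lia. apply HME1. auto.
    + intros i Hi. destruct (Hint (S i) ltac:(lia)) as [Hu [[l1 [A1 [A2 A3]]] [l2 [B1 [B2 B3]]]]].
      replace (S (i - 1)) with (S i - 1) by lia. split; [|split].
      * rewrite MV_S. intros [H|H].
        -- unfold pa1 in H. rewrite HMVa in H. auto.
        -- unfold pa1 in H. replace (S r <=? r) with false in H by (symmetry; apply Nat.leb_gt; lia).
           apply Hinj in H; lia.
      * exists l1; auto.
      * exists l2; split; [|split]; auto. eapply Forall_impl; [|exact B3].
        simpl. intros a Ha. intuition.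
    + destruct (finish adj n (S r) pb1 (p 1) (p 0 :: p 2 :: Lm) (p 0 :: p 2 :: Loff))
        as [f Hf]; auto.
      { constructor; [apply HME1, ME_sym; auto|constructor].
        - apply ME_S. right. left. unfold pb1. rewrite Nat.ltb_irrefl. auto.
        - eapply Forall_impl; [|exact HLm3]. simpl. intros a Ha. apply HME1; tauto. }
      exists (fun l => match l with [] => e
                        | x :: l' => if excluded_middle_informative (x = p 1)
                                     then sigma1 l' else f end).
      intros c.
      destruct (classic (MV pa (S r) (c 0))) as [Hill | Hleg].
      * exists r. split; [|split].
        -- intros i Hi. apply (alice_legal_ext _ pa r); try lia.
           intros; apply playA_lo; auto. apply HA; lia.
        -- intros j Hj. destruct (Nat.eq_dec j r).
           ++ subst j. apply (bob_legal_ext _ _ pb1 r); auto.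
              intros i Hi. destruct (Nat.eq_dec i r).
              ** subst i. rewrite playB_r. unfold pb1. rewrite Nat.ltb_irrefl. auto.
              ** rewrite playB_lo by lia. unfold pb1. rewrite (proj2 (Nat.ltb_lt i r)) by lia; auto.
           ++ apply (bob_legal_ext _ _ pb j); try lia. intros; apply playB_lo; lia.
              apply HB; lia.
        -- right. split.
           ++ unfold alice_legal. rewrite playA_Sr.
              rewrite (MV_ext _ pa (S r)) by (intros; apply playA_lo; lia). tauto.
           ++ exists (p 1). rewrite (MV_ext _ pa (S r)) by (intros; apply playA_lo; lia). auto.
      * rewrite shiftA, shiftB. simpl.
        destruct (classic (c 0 = p 1)) as [Heq | Hne].
        -- replace (fun l => if excluded_middle_informative (c 0 = p 1) then sigma1 l else f)
             with sigma1.
           2:{ apply functional_extensionality; intro l.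
               destruct (excluded_middle_informative (c 0 = p 1)); tauto. }
           rewrite Heq. apply Hs1.
        -- replace (fun l => if excluded_middle_informative (c 0 = p 1) then sigma1 l else f)
             with (fun _ : list V => f).
           2:{ apply functional_extensionality; intro l.
               destruct (excluded_middle_informative (c 0 = p 1)); tauto. }
           apply Hf; auto.
           rewrite MV_S. intros [H|H].
           ++ rewrite HMVa in H. auto.
           ++ replace (S r <=? r) with false in H by (symmetry; apply Nat.leb_gt; lia). auto.
Qed.

Theorem theorem5p2 (V : Type) (adj : V -> V -> Prop)
  (adj_sym : forall x y, adj x y -> adj y x)
  (adj_irrefl : forall x, ~ adj x x)
  (n r : nat) (pa : nat -> V) (pb : nat -> V * V) :
  (forall i, i <= r -> alice_legal pa i) ->
  (forall j, j < r -> bob_legal adj pb j) ->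
  n_free_path adj (MV pa (S r)) (ME pb r) n ->
  exists sigma : list V -> V * V,
    forall c : nat -> V,
      final_score_ge adj (play_A r pa c) (play_B r pb sigma c) (n + 3).
Proof.
  intros HA HB [p [k [Hk [Hinj [Hadj [H01 [Hlast Hint]]]]]]].
  eapply main; eauto.
Qed.
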